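(* Let $f:[0,1]\to\mathbb{R}$ be a piecewise $C^1$, concave, non-negative function which is not identically zero, and let $$\Omega=\{(y_1,y_2)\in\mathbb{R}^2: 0\le y_1\le 1,\ |y_2|\le f(y_1)\}.$$ Let $a=\min\{\tau\in[0,1]: f(\tau)=\max_{[0,1]}f\}$ and $b=\max\{\tau\in[0,1]: f(\tau)=\max_{[0,1]}f\}$. Then $$uf(\Omega)\subset\{(y_1,0)\in\Omega: a/2\le y_1\le (1+b)/2\}.$$
   Context: Minimal unfolded region: for $v\in S^1$ and $c\in\mathbb{R}$ let $I_{v,c}$ be the reflection in the line $\{z: z\cdot v=c\}$, $\Omega^+_{v,a}=\Omega\cap\{z\cdot v\ge a\}$, $\Omega^-_{v,a}=\Omega\cap\{z\cdot v\le a\}$, $u(v)=\inf\{b: I_{v,c}(\Omega^+_{v,c})\subset\Omega\ \forall c\ge b\}$, $l(v)=\sup\{b: I_{v,c}(\Omega^-_{v,c})\subset\Omega\ \forall c\le b\}$, and $uf(\Omega)=\bigcap_{v\in S^1}\{z\in\mathbb{R}^2: l(v)\le z\cdot v\le u(v)\}$. *)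

(* Defs.v *)
From Stdlib Require Import Reals.
Open Scope R_scope.

Definition pt := (R * R)%type.

Definition dot (z v : pt) : R := fst z * fst v + snd z * snd v.

Definition in_S1 (v : pt) : Prop := fst v ^ 2 + snd v ^ 2 = 1.

(* reflection in the line {z : z.v = c} (v unit) *)
Definition refl (v : pt) (c : R) (z : pt) : pt :=
  (fst z - 2 * (dot z v - c) * fst v, snd z - 2 * (dot z v - c) * snd v).

Definition Omega_plus (Om : pt -> Prop) (v : pt) (a : R) (z : pt) : Prop :=
  Om z /\ dot z v >= a.
Definition Omega_minus (Om : pt -> Prop) (v : pt) (a : R) (z : pt) : Prop :=
  Om z /\ dot z v <= a.

Definition refl_sub (Om A : pt -> Prop) (v : pt) (c : R) : Prop :=
  forall z, A z -> Om (refl v c z).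

(* the set whose infimum is u(v) *)
Definition U_set (Om : pt -> Prop) (v : pt) (b : R) : Prop :=
  forall c, c >= b -> refl_sub Om (Omega_plus Om v c) v c.
(* the set whose supremum is l(v) *)
Definition L_set (Om : pt -> Prop) (v : pt) (b : R) : Prop :=
  forall c, c <= b -> refl_sub Om (Omega_minus Om v c) v c.

(* "x <= u(v)" with u(v) = inf U_set (in the extended reals):
   x is a lower bound of U_set *)
Definition le_u (Om : pt -> Prop) (v : pt) (x : R) : Prop :=
  forall b, U_set Om v b -> x <= b.
(* "l(v) <= x" with l(v) = sup L_set: x is an upper bound of L_set *)
Definition l_le (Om : pt -> Prop) (v : pt) (x : R) : Prop :=
  forall b, L_set Om v b -> b <= x.

Definition uf (Om : pt -> Prop) (z : pt) : Prop :=
  forall v, in_S1 v -> l_le Om v (dot z v) /\ le_u Om v (dot z v).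

Definition C1_on_interval (f : R -> R) (s t : R) : Prop :=
  exists g g' : R -> R,
    (forall x, derivable_pt_lim g x (g' x)) /\ continuity g' /\
    (forall x, s <= x <= t -> f x = g x).

Definition piecewise_C1 (f : R -> R) : Prop :=
  exists (n : nat) (t : nat -> R),
    t 0%nat = 0 /\ t n = 1 /\
    (forall i, (i < n)%nat -> t i < t (S i)) /\
    (forall i, (i < n)%nat -> C1_on_interval f (t i) (t (S i))).

Definition concave_on01 (f : R -> R) : Prop :=
  forall x y l, 0 <= x <= 1 -> 0 <= y <= 1 -> 0 <= l <= 1 ->
    l * f x + (1 - l) * f y <= f (l * x + (1 - l) * y).

Definition Omega_f (f : R -> R) (z : pt) : Prop :=
  0 <= fst z <= 1 /\ Rabs (snd z) <= f (fst z).

Definition is_argmax01 (f : R -> R) (tau : R) : Prop :=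
  0 <= tau <= 1 /\ forall x, 0 <= x <= 1 -> f x <= f tau.

(* Main.v *)
Require Import Defs.
From Stdlib Require Import Reals Lra.
Open Scope R_scope.

Lemma conc_mono (f : R -> R) (M x y : R) :
  concave_on01 f -> is_argmax01 f M ->
  0 <= x <= 1 -> 0 <= y <= 1 ->
  ((M <= x <= y) \/ (y <= x <= M)) -> f y <= f x.
Proof.
  intros Hc [HM Hmax] Hx Hy Hord.
  destruct (Req_dec y M) as [E|NE].
  - subst y. assert (x = M) by lra. subst. lra.
  - set (l := (y - x) / (y - M)).
    assert (Hl : 0 <= l <= 1).
    { unfold l. destruct Hord as [H|H].
      + assert (y - M > 0) by lra. split.
        * apply Rmult_le_pos; [lra|]. left; apply Rinv_0_lt_compat; lra.
        * apply (Rmult_le_reg_r (y - M)); [lra|]. unfold Rdiv.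
          rewrite Rmult_assoc, Rinv_l by lra. lra.
      + assert (y - M < 0) by lra.
        replace ((y - x) / (y - M)) with ((x - y) / (M - y)) by (field; lra).
        assert (M - y > 0) by lra. split.
        * apply Rmult_le_pos; [lra|]. left; apply Rinv_0_lt_compat; lra.
        * apply (Rmult_le_reg_r (M - y)); [lra|]. unfold Rdiv.
          rewrite Rmult_assoc, Rinv_l by lra. lra. }
    pose proof (Hc M y l HM Hy Hl) as H.
    replace (l * M + (1 - l) * y) with x in H by (unfold l; field; lra).
    pose proof (Hmax y Hy). nra.
Qed.

Theorem lemma4p6 (f : R -> R) (a b : R) :
  piecewise_C1 f ->
  concave_on01 f ->
  (forall x, 0 <= x <= 1 -> 0 <= f x) ->
  (exists x, 0 <= x <= 1 /\ f x <> 0) ->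
  (* a = min of the set of maximum points of f on [0,1] *)
  is_argmax01 f a -> (forall tau, is_argmax01 f tau -> a <= tau) ->
  (* b = max of the set of maximum points of f on [0,1] *)
  is_argmax01 f b -> (forall tau, is_argmax01 f tau -> tau <= b) ->
  forall z, uf (Omega_f f) z ->
    Omega_f f z /\ snd z = 0 /\ a / 2 <= fst z <= (1 + b) / 2.
Proof.
  intros _ Hc Hnn _ Ha _ Hb _ z Hz.
  assert (S01 : in_S1 (0,1)) by (unfold in_S1; simpl; ring).
  assert (S10 : in_S1 (1,0)) by (unfold in_S1; simpl; ring).
  destruct (Hz _ S01) as [L01 U01].
  destruct (Hz _ S10) as [L10 U10].
  assert (Z2le : snd z <= 0).
  { assert (H := U01 0). unfold dot in H; simpl in H.
    replace (fst z * 0 + snd z * 1) with (snd z) in H by ring. apply H.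
    intros c Hcge w [[Hw1 Hw2] Hw3]. unfold Omega_f, refl, dot in *; simpl in *.
    split; [lra|].
    replace (fst w - 2 * (fst w * 0 + snd w * 1 - c) * 0) with (fst w) by ring.
    replace (snd w - 2 * (fst w * 0 + snd w * 1 - c) * 1) with (2*c - snd w) by ring.
    revert Hw2. unfold Rabs. repeat destruct Rcase_abs; lra. }
  assert (Z2ge : 0 <= snd z).
  { assert (H := L01 0). unfold dot in H; simpl in H.
    replace (fst z * 0 + snd z * 1) with (snd z) in H by ring. apply H.
    intros c Hcge w [[Hw1 Hw2] Hw3]. unfold Omega_f, refl, dot in *; simpl in *.
    split; [lra|].
    replace (fst w - 2 * (fst w * 0 + snd w * 1 - c) * 0) with (fst w) by ring.
    replace (snd w - 2 * (fst w * 0 + snd w * 1 - c) * 1) with (2*c - snd w) by ring.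
    revert Hw2. unfold Rabs. repeat destruct Rcase_abs; lra. }
  destruct Ha as [Ha01 Hamax]. destruct Hb as [Hb01 Hbmax].
  assert (Z1le : fst z <= (1 + b) / 2).
  { assert (H := U10 ((1 + b) / 2)). unfold dot in H; simpl in H.
    replace (fst z * 1 + snd z * 0) with (fst z) in H by ring. apply H.
    intros c Hcge w [[Hw1 Hw2] Hw3]. unfold Omega_f, refl, dot in *; simpl in *.
    replace (fst w - 2 * (fst w * 1 + snd w * 0 - c) * 1) with (2*c - fst w) by ring.
    replace (snd w - 2 * (fst w * 1 + snd w * 0 - c) * 0) with (snd w) by ring.
    assert (Hm : f (fst w) <= f (2*c - fst w)).
    { apply (conc_mono f b); [exact Hc | split; assumption | lra | lra | left; lra]. }
    split; [split|]; lra. }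
  assert (Z1ge : a / 2 <= fst z).
  { assert (H := L10 (a / 2)). unfold dot in H; simpl in H.
    replace (fst z * 1 + snd z * 0) with (fst z) in H by ring. apply H.
    intros c Hcge w [[Hw1 Hw2] Hw3]. unfold Omega_f, refl, dot in *; simpl in *.
    replace (fst w - 2 * (fst w * 1 + snd w * 0 - c) * 1) with (2*c - fst w) by ring.
    replace (snd w - 2 * (fst w * 1 + snd w * 0 - c) * 0) with (snd w) by ring.
    assert (Hm : f (fst w) <= f (2*c - fst w)).
    { apply (conc_mono f a); [exact Hc | split; assumption | lra | lra | right; lra]. }
    split; [split|]; lra. }
  assert (E : snd z = 0) by lra.
  split; [|split; [exact E| lra]].
  unfold Omega_f. split; [lra|]. rewrite E, Rabs_R0. apply Hnn. lra.
Qed.
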